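(* Let $X=\varprojlim X_np_n$ be a reduced regular projective limit of vector lattices, $X_0\subset X$ a vector subspace, $q_1\colon X_1\to\mathbb R$ increasing and concave, $q:=q_1\circ\operatorname{pr}_1$, $H\subset X$ convex, $H_n:=\operatorname{pr}_nH$. Assume: (ii) for each $n$, $H_n$ is minorizing for $\operatorname{pr}_nX_0$; (v) for every decreasing sequence $(h^{(k)})\subset H$ with $\inf_kq(h^{(k)})\in\mathbb R$, the sequence is bounded below in $X$ and $q(\inf_kh^{(k)})\ge\inf_kq(h^{(k)})$; (iii–iv) for every sequence $(h^{(k)})\subset H$ bounded in $X$, $\limsup_kh^{(k)}:=\inf_n\sup_{k\ge n}h^{(k)}$ exists and belongs to $H$. Then $\mathrm{spf}_{H,q}$ is a concave function with values in $\mathbb R\cup\{-\infty\}$, and for all $x\in X_0$ $$\mathrm{spf}_{H,q}(x)=\inf\{a(x):\ a\in L,\ q(h)\le a(x')\ \text{for all }h\in H,\ x'\in X_0,\ h\le x'\}$$ where $L$ is the set of all affine functions $X_0\to\mathbb R$. If moreover $0\in H$ and $q_1(0)\ge0$, then $\mathrm{spf}_{H,q}$ is positive and $L$ may be replaced by $\{l+c:\ l\colon X_0\to\mathbb R\text{ positive linear},\ c\in\mathbb R,\ c\ge0\}$.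
   Context: All vector spaces are real. Projective limit: for ordered vector spaces $(X_n,\le_n)$ and positive linear $p_n\colon X_{n+1}\to X_n$, $X=\varprojlim X_np_n=\{x=(x_n)\in\prod X_n:\ x_n=p_n(x_{n+1})\ \forall n\}$ with coordinatewise order, $\operatorname{pr}_nx=x_n$; regular if all $X_n$ are vector lattices and each $p_n$ preserves suprema of finite sets; reduced if $\operatorname{pr}_nX=X_n$ for all $n$. A set $G\subset X_n$ is minorizing for $Y$ if each $y\in Y$ has some $g\in G$ with $g\le_ny$. Supremal function: $\mathrm{spf}_{H,q}(x)=\sup\{q(h):\ h\in H,\ h\le x\}$, $\sup\varnothing=-\infty$. A function $a$ on a vector space is affine if $a(tx_1+(1-t)x_2)=ta(x_1)+(1-t)a(x_2)$ for all $x_1,x_2$, $t\in\mathbb R$. Positive: $g(x)\ge0$ for $x\ge0$. *)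

(* Defs.v *)
From Stdlib Require Import Reals Lra Classical ClassicalEpsilon.
Open Scope R_scope.
Set Implicit Arguments.

Inductive Rbar : Type := Fin (r : R) | p_infty | m_infty.

Definition Rbar_le (a b : Rbar) : Prop :=
  match a, b with
  | m_infty, _ => True
  | _, p_infty => True
  | Fin x, Fin y => x <= y
  | _, _ => False
  end.

(* addition; -oo is absorbing (only used for values that are not +oo) *)
Definition Rbar_plus (a b : Rbar) : Rbar :=
  match a, b with
  | m_infty, _ | _, m_infty => m_infty
  | p_infty, _ | _, p_infty => p_infty
  | Fin x, Fin y => Fin (x + y)
  end.

(* multiplication by a scalar t >= 0, with the convention 0 * (+-oo) = 0 *)
Definition Rbar_scal (t : R) (a : Rbar) : Rbar :=
  match a with
  | Fin x => Fin (t * x)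
  | _ => if Req_EM_T t 0 then Fin 0 else a
  end.

Definition is_sup_Rbar (S : R -> Prop) (s : Rbar) : Prop :=
  (forall r, S r -> Rbar_le (Fin r) s) /\
  (forall u, (forall r, S r -> Rbar_le (Fin r) u) -> Rbar_le s u).

Definition is_inf_Rbar (S : R -> Prop) (s : Rbar) : Prop :=
  (forall r, S r -> Rbar_le s (Fin r)) /\
  (forall u, (forall r, S r -> Rbar_le u (Fin r)) -> Rbar_le u s).

(* sup / inf in R ∪ {±oo}; sup ∅ = -oo, inf ∅ = +oo *)
Definition Rbar_sup (S : R -> Prop) : Rbar :=
  epsilon (inhabits m_infty) (is_sup_Rbar S).
Definition Rbar_inf (S : R -> Prop) : Rbar :=
  epsilon (inhabits p_infty) (is_inf_Rbar S).

Record VL := mkVL {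
  car :> Type;
  vadd : car -> car -> car;
  vscal : R -> car -> car;
  vzero : car;
  vle : car -> car -> Prop;
  vjoin : car -> car -> car;
  vadd_assoc : forall x y z, vadd x (vadd y z) = vadd (vadd x y) z;
  vadd_comm : forall x y, vadd x y = vadd y x;
  vadd_0 : forall x, vadd x vzero = x;
  vadd_opp : forall x, vadd x (vscal (-1) x) = vzero;
  vscal_1 : forall x, vscal 1 x = x;
  vscal_assoc : forall a b x, vscal a (vscal b x) = vscal (a * b) x;
  vscal_distr_v : forall a x y, vscal a (vadd x y) = vadd (vscal a x) (vscal a y);
  vscal_distr_s : forall a b x, vscal (a + b) x = vadd (vscal a x) (vscal b x);
  vle_refl : forall x, vle x x;
  vle_antisym : forall x y, vle x y -> vle y x -> x = y;
  vle_trans : forall x y z, vle x y -> vle y z -> vle x z;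
  vle_add : forall x y z, vle x y -> vle (vadd x z) (vadd y z);
  vle_scal : forall a x y, 0 <= a -> vle x y -> vle (vscal a x) (vscal a y);
  vjoin_ub1 : forall x y, vle x (vjoin x y);
  vjoin_ub2 : forall x y, vle y (vjoin x y);
  vjoin_least : forall x y z, vle x z -> vle y z -> vle (vjoin x y) z
}.

Arguments vzero : clear implicits.
Arguments vadd {v} _ _.
Arguments vscal {v} _ _.
Arguments vle {v} _ _.
Arguments vjoin {v} _ _.

Definition pos_linear_map (A B : VL) (f : A -> B) : Prop :=
  (forall x y, f (vadd x y) = vadd (f x) (f y)) /\
  (forall a x, f (vscal a x) = vscal a (f x)) /\
  (forall x, vle (vzero A) x -> vle (vzero B) (f x)).

Arguments pos_linear_map {A B} f.

Section Lim.
Variable Xs : nat -> VL.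
Variable p : forall n, Xs (S n) -> Xs n.

Definition prodX := forall n, Xs n.

Definition inLim (x : prodX) : Prop := forall n, x n = p n (x (S n)).

(* regular: the X_n are vector lattices (built into VL), each p_n is positive
   linear and preserves suprema of finite sets (binary joins) *)
Definition regular : Prop :=
  forall n, pos_linear_map (p n) /\
    forall x y, p n (vjoin x y) = vjoin (p n x) (p n y).

Definition reduced : Prop :=
  forall n (y : Xs n), exists x, inLim x /\ x n = y.

Definition Xzero : prodX := fun n => vzero (Xs n).
Definition Xadd (x y : prodX) : prodX := fun n => vadd (x n) (y n).
Definition Xscal (t : R) (x : prodX) : prodX := fun n => vscal t (x n).
Definition Xle (x y : prodX) : Prop := forall n, vle (x n) (y n).

Definition is_sup_X (A : prodX -> Prop) (s : prodX) : Prop :=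
  inLim s /\ (forall z, A z -> Xle z s) /\
  (forall b, inLim b -> (forall z, A z -> Xle z b) -> Xle s b).

Definition is_inf_X (A : prodX -> Prop) (g : prodX) : Prop :=
  inLim g /\ (forall z, A z -> Xle g z) /\
  (forall b, inLim b -> (forall z, A z -> Xle b z) -> Xle b g).

Definition subspace (Y : prodX -> Prop) : Prop :=
  (forall x, Y x -> inLim x) /\ Y Xzero /\
  (forall x y, Y x -> Y y -> Y (Xadd x y)) /\
  (forall t x, Y x -> Y (Xscal t x)).

Definition convex_subset (H : prodX -> Prop) : Prop :=
  (forall h, H h -> inLim h) /\
  (forall h1 h2 t, H h1 -> H h2 -> 0 <= t <= 1 ->
     H (Xadd (Xscal t h1) (Xscal (1 - t) h2))).

(* q := q1 o pr_1  (first space indexed by 0) *)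
Definition qof (q1 : Xs 0 -> R) (x : prodX) : R := q1 (x O).

Definition spf (H : prodX -> Prop) (q : prodX -> R) (x : prodX) : Rbar :=
  Rbar_sup (fun r => exists h, H h /\ Xle h x /\ r = q h).

Definition concave_Rbar (f : prodX -> Rbar) : Prop :=
  forall x y t, inLim x -> inLim y -> 0 <= t <= 1 ->
    Rbar_le (Rbar_plus (Rbar_scal t (f x)) (Rbar_scal (1 - t) (f y)))
            (f (Xadd (Xscal t x) (Xscal (1 - t) y))).

(* affine functions X_0 -> R (represented on the ambient space; only the
   values on Y matter) *)
Definition affine_on (Y : prodX -> Prop) (a : prodX -> R) : Prop :=
  forall x1 x2 t, Y x1 -> Y x2 ->
    a (Xadd (Xscal t x1) (Xscal (1 - t) x2)) = t * a x1 + (1 - t) * a x2.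

Definition pos_linear_on (Y : prodX -> Prop) (l : prodX -> R) : Prop :=
  (forall x y, Y x -> Y y -> l (Xadd x y) = l x + l y) /\
  (forall t x, Y x -> l (Xscal t x) = t * l x) /\
  (forall x, Y x -> Xle Xzero x -> 0 <= l x).

End Lim.

Definition increasing_fun (A : VL) (f : A -> R) : Prop :=
  forall x y, vle x y -> f x <= f y.

Arguments increasing_fun {A} f.

Definition concave_fun (A : VL) (f : A -> R) : Prop :=
  forall x y t, 0 <= t <= 1 ->
    t * f x + (1 - t) * f y <= f (vadd (vscal t x) (vscal (1 - t) y)).

Arguments concave_fun {A} f.
Arguments regular {Xs} p.
Arguments reduced {Xs} p.

(* Main.v *)
Require Import Defs.
From Stdlib Require Import Reals Lra Lia Classical ClassicalEpsilon FunctionalExtensionality PropExtensionality.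
From mathcomp Require classical_sets.
Open Scope R_scope.
Arguments vadd_assoc {v}. Arguments vadd_comm {v}. Arguments vadd_0 {v}. Arguments vadd_opp {v}.
Arguments vscal_1 {v}. Arguments vscal_assoc {v}. Arguments vscal_distr_v {v}. Arguments vscal_distr_s {v}.
Arguments vle_refl {v}. Arguments vle_antisym {v}. Arguments vle_trans {v}. Arguments vle_add {v}.
Arguments vle_scal {v}. Arguments vjoin_ub1 {v}. Arguments vjoin_ub2 {v}. Arguments vjoin_least {v}.

Lemma my_zorn (T : Type) (P : (T -> Prop) -> Prop) :
  (forall F : (T -> Prop) -> Prop, (forall X, F X -> P X) ->
     (forall X Y, F X -> F Y -> (forall t, X t -> Y t) \/ (forall t, Y t -> X t)) ->
     P (fun t => exists X, F X /\ X t)) ->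
  exists A, P A /\ forall B, (forall t, A t -> B t) -> (exists t, B t /\ ~ A t) -> ~ P B.
Proof.
intros HF.
destruct (@classical_sets.Zorn_bigcup T P) as [A [PA HA]].
- intros F FP Ftot.
  assert (E : classical_sets.bigcup F (fun X => X) = (fun t => exists X, F X /\ X t)).
  { apply functional_extensionality; intro t. apply propositional_extensionality.
    split; [intros [X FX Xt]; exists X; tauto | intros [X [FX Xt]]; exists X; auto]. }
  rewrite E. apply HF; [exact FP|].
  intros X Y FX FY. destruct (Ftot X Y FX FY) as [h|h]; [left|right]; exact h.
- exists A; split; [exact PA|].
  intros B AB [t [Bt nAt]] PB. apply (HA B); [|exact PB].
  split; [exact AB|]. intro BA. apply nAt. apply BA. exact Bt.
Qed.

Section VLalg.
Variable V : VL.
Implicit Types x y z : V.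

Lemma vadd_0l x : vadd (vzero V) x = x.
Proof. rewrite vadd_comm; apply vadd_0. Qed.

Lemma vadd_cancel_l x y z : vadd x y = vadd x z -> y = z.
Proof.
intro E.
assert (E2 : vadd (vscal (-1) x) (vadd x y) = vadd (vscal (-1) x) (vadd x z)) by (rewrite E; reflexivity).
rewrite !vadd_assoc in E2.
rewrite (vadd_comm (vscal (-1) x) x), vadd_opp, !vadd_0l in E2. exact E2.
Qed.

Lemma vadd_cancel_r x y z : vadd y x = vadd z x -> y = z.
Proof. rewrite (vadd_comm y), (vadd_comm z). apply vadd_cancel_l. Qed.

Lemma vscal_0 x : vscal 0 x = vzero V.
Proof.
apply (vadd_cancel_l (vscal 0 x)). rewrite vadd_0, <- vscal_distr_s.
now rewrite Rplus_0_l.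
Qed.

Lemma vscal_zero a : vscal a (vzero V) = vzero V.
Proof.
rewrite <- (vscal_0 (vzero V)) at 1. rewrite vscal_assoc, Rmult_0_r. apply vscal_0.
Qed.

Lemma vadd_AC x y z w : vadd (vadd x y) (vadd z w) = vadd (vadd x z) (vadd y w).
Proof.
rewrite <- !vadd_assoc. f_equal. rewrite !vadd_assoc. f_equal. apply vadd_comm.
Qed.

Lemma vscal_add_same a b x : vadd (vscal a x) (vscal b x) = vscal (a + b) x.
Proof. now rewrite vscal_distr_s. Qed.

Lemma vle_sub x y : vle x y -> vle (vzero V) (vadd y (vscal (-1) x)).
Proof.
intro h. rewrite <- (vadd_opp x). apply vle_add. exact h.
Qed.

Lemma vle_sub_inv x y : vle (vzero V) (vadd y (vscal (-1) x)) -> vle x y.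
Proof.
intro h. apply (vle_add _ _ x) in h. rewrite vadd_0l, <- vadd_assoc in h.
rewrite (vadd_comm (vscal (-1) x) x), vadd_opp, vadd_0 in h. exact h.
Qed.

Lemma vjoin_absorb x y : vle y x -> vjoin x y = x.
Proof.
intro h. apply vle_antisym. apply vjoin_least; [apply vle_refl|exact h]. apply vjoin_ub1.
Qed.

Lemma vjoin_mono x y x' y' : vle x x' -> vle y y' -> vle (vjoin x y) (vjoin x' y').
Proof.
intros h1 h2. apply vjoin_least.
- eapply vle_trans; [exact h1|apply vjoin_ub1].
- eapply vle_trans; [exact h2|apply vjoin_ub2].
Qed.

Lemma vle_add2 x y x' y' : vle x x' -> vle y y' -> vle (vadd x y) (vadd x' y').
Proof.
intros h1 h2. eapply vle_trans. apply vle_add; exact h1.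
rewrite (vadd_comm x' y), (vadd_comm x' y'). apply vle_add; exact h2.
Qed.

Lemma vle_comb t x y x' y' : 0 <= t <= 1 -> vle x x' -> vle y y' ->
  vle (vadd (vscal t x) (vscal (1 - t) y)) (vadd (vscal t x') (vscal (1 - t) y')).
Proof.
intros [h0 h1] a b. apply vle_add2; apply vle_scal; auto; lra.
Qed.

End VLalg.

Arguments vadd_0l {V}.
Arguments vscal_0 {V}.
Arguments vscal_zero {V}.

Lemma plm_mono (A B : VL) (f : A -> B) : pos_linear_map f ->
  forall x y, vle x y -> vle (f x) (f y).
Proof.
intros [fa [fs fp]] x y h. apply vle_sub_inv. rewrite <- fs, <- fa. apply fp.
apply vle_sub; exact h.
Qed.
Lemma Rbar_le_refl a : Rbar_le a a.
Proof. destruct a; simpl; auto; lra. Qed.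

Lemma Rbar_le_trans a b c : Rbar_le a b -> Rbar_le b c -> Rbar_le a c.
Proof. destruct a, b, c; simpl; auto; try lra; tauto. Qed.

Lemma Rbar_le_antisym a b : Rbar_le a b -> Rbar_le b a -> a = b.
Proof. destruct a, b; simpl; try tauto. intros; f_equal; lra. Qed.

Lemma sup_exists (S : R -> Prop) : exists s, is_sup_Rbar S s.
Proof.
destruct (classic (exists x, S x)) as [ne|em].
- destruct (classic (exists M, forall x, S x -> x <= M)) as [bd|nbd].
  + destruct (completeness S bd ne) as [m [ub lub]].
    exists (Fin m). split.
    * intros r Sr. simpl. apply ub; exact Sr.
    * intros u hu. destruct u as [u| |].
      -- simpl. apply lub. intros x Sx. specialize (hu x Sx). exact hu.
      -- simpl; auto.
      -- destruct ne as [x Sx]. specialize (hu x Sx). simpl in hu. contradiction.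
  + exists p_infty. split.
    * intros; simpl; auto.
    * intros u hu. destruct u as [u| |].
      -- exfalso. apply nbd. exists u. intros x Sx. exact (hu x Sx).
      -- simpl; auto.
      -- destruct ne as [x Sx]. specialize (hu x Sx). simpl in hu. contradiction.
- exists m_infty. split.
  + intros r Sr. exfalso. apply em. exists r. exact Sr.
  + intros; simpl; auto.
Qed.

Lemma inf_exists (S : R -> Prop) : exists s, is_inf_Rbar S s.
Proof.
destruct (sup_exists (fun x => S (- x))) as [s [h1 h2]].
exists (match s with Fin r => Fin (- r) | p_infty => m_infty | m_infty => p_infty end).
split.
- intros r Sr. assert (Sr' : S (- - r)) by (rewrite Ropp_involutive; exact Sr).
  specialize (h1 _ Sr'). destruct s; simpl in *; auto. lra.
- intros u hu. assert (k : forall x, S (- x) -> Rbar_le (Fin x)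
     (match u with Fin r => Fin (- r) | p_infty => m_infty | m_infty => p_infty end)).
  { intros x Sx. specialize (hu _ Sx). destruct u; simpl in *; auto. lra. }
  specialize (h2 _ k). destruct s, u; simpl in *; auto; lra.
Qed.

Lemma Rbar_sup_spec S : is_sup_Rbar S (Rbar_sup S).
Proof. unfold Rbar_sup. apply epsilon_spec. apply sup_exists. Qed.

Lemma Rbar_inf_spec S : is_inf_Rbar S (Rbar_inf S).
Proof. unfold Rbar_inf. apply epsilon_spec. apply inf_exists. Qed.

Lemma is_sup_unique S a b : is_sup_Rbar S a -> is_sup_Rbar S b -> a = b.
Proof.
intros [a1 a2] [b1 b2]. apply Rbar_le_antisym; [apply a2; exact b1 | apply b2; exact a1].
Qed.

Lemma is_inf_unique S a b : is_inf_Rbar S a -> is_inf_Rbar S b -> a = b.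
Proof.
intros [a1 a2] [b1 b2]. apply Rbar_le_antisym; [apply b2; exact a1 | apply a2; exact b1].
Qed.

Lemma Rbar_inf_eq S a : is_inf_Rbar S a -> Rbar_inf S = a.
Proof. intro h. eapply is_inf_unique; [apply Rbar_inf_spec|exact h]. Qed.

Lemma sup_Fin_ub S r x : is_sup_Rbar S (Fin r) -> S x -> x <= r.
Proof. intros [h _] Sx. exact (h x Sx). Qed.

Lemma sup_Fin_lub S r M : is_sup_Rbar S (Fin r) -> (forall x, S x -> x <= M) -> r <= M.
Proof. intros [_ h] hM. exact (h (Fin M) hM). Qed.

Lemma sup_Fin_ne S r : is_sup_Rbar S (Fin r) -> exists x, S x.
Proof.
intros [_ h]. apply NNPP. intro ne. specialize (h m_infty). simpl in h. apply h.
intros x Sx. apply ne. exists x. exact Sx.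
Qed.

Definition rsup (S : R -> Prop) : R :=
  match Rbar_sup S with Fin r => r | _ => 0 end.

Lemma rsup_spec S : (exists x, S x) -> (exists M, forall x, S x -> x <= M) ->
  is_sup_Rbar S (Fin (rsup S)).
Proof.
intros [x Sx] [M hM]. pose proof (Rbar_sup_spec S) as sp. unfold rsup.
destruct (Rbar_sup S) as [r| |] eqn:E.
- exact sp.
- exfalso. destruct sp as [_ h]. specialize (h (Fin M) hM). simpl in h. exact h.
- exfalso. destruct sp as [h _]. specialize (h x Sx). simpl in h. exact h.
Qed.

Lemma scal_sup_le S r t c : is_sup_Rbar S (Fin r) -> 0 <= t ->
  (forall x, S x -> t * x <= c) -> t * r <= c.
Proof.
intros sp ht hx. destruct (Req_dec t 0) as [t0|tn].
- destruct (sup_Fin_ne _ _ sp) as [x Sx]. specialize (hx x Sx). subst t. lra.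
- assert (tp : 0 < t) by lra.
  assert (r <= c / t).
  { apply (sup_Fin_lub _ _ _ sp). intros x Sx. specialize (hx x Sx).
    apply (Rmult_le_reg_l t); auto. field_simplify; lra. }
  apply (Rmult_le_compat_l t) in H; [|lra]. field_simplify in H; lra.
Qed.

Lemma comb_sup_le A B a b t c : is_sup_Rbar A (Fin a) -> is_sup_Rbar B (Fin b) ->
  0 <= t <= 1 ->
  (forall x y, A x -> B y -> t * x + (1 - t) * y <= c) ->
  t * a + (1 - t) * b <= c.
Proof.
intros sa sb ht h.
assert (k : forall y, B y -> (1 - t) * y <= c - t * a).
{ intros y By. enough (t * a <= c - (1 - t) * y) by lra.
  apply (scal_sup_le _ _ _ _ sa); [lra|]. intros x Ax. specialize (h x y Ax By). lra. }
enough ((1 - t) * b <= c - t * a) by lra.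
apply (scal_sup_le _ _ _ _ sb); [lra|exact k].
Qed.
Section Xalg.
Variable Xs : nat -> VL.
Notation PX := (prodX Xs).
Implicit Types x y z u v : PX.

Lemma Xext x y : (forall n, x n = y n) -> x = y.
Proof. intro h. apply functional_extensionality_dep. exact h. Qed.

Lemma Xadd_0 x : Xadd x (Xzero Xs) = x.
Proof. apply Xext; intro n. apply vadd_0. Qed.
Lemma Xadd_0l x : Xadd (Xzero Xs) x = x.
Proof. apply Xext; intro n. apply vadd_0l. Qed.
Lemma Xscal_0 x : Xscal 0 x = Xzero Xs.
Proof. apply Xext; intro n. apply vscal_0. Qed.
Lemma Xscal_1 x : Xscal 1 x = x.
Proof. apply Xext; intro n. apply vscal_1. Qed.
Lemma Xscal_zero a : Xscal a (Xzero Xs) = Xzero Xs.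
Proof. apply Xext; intro n. apply vscal_zero. Qed.
Lemma Xadd_comm x y : Xadd x y = Xadd y x.
Proof. apply Xext; intro n. apply vadd_comm. Qed.
Lemma Xadd_assoc x y z : Xadd x (Xadd y z) = Xadd (Xadd x y) z.
Proof. apply Xext; intro n. apply vadd_assoc. Qed.
Lemma Xscal_add a x y : Xscal a (Xadd x y) = Xadd (Xscal a x) (Xscal a y).
Proof. apply Xext; intro n. apply vscal_distr_v. Qed.
Lemma Xscal_scal a b x : Xscal a (Xscal b x) = Xscal (a * b) x.
Proof. apply Xext; intro n. apply vscal_assoc. Qed.
Lemma Xscal_plus a b x : Xadd (Xscal a x) (Xscal b x) = Xscal (a + b) x.
Proof. apply Xext; intro n. symmetry. apply vscal_distr_s. Qed.
Lemma Xadd_AC x y z u : Xadd (Xadd x y) (Xadd z u) = Xadd (Xadd x z) (Xadd y u).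
Proof. apply Xext; intro n. apply vadd_AC. Qed.

Definition Xsub y x := Xadd y (Xscal (-1) x).

Lemma Xadd_opp x : Xadd x (Xscal (-1) x) = Xzero Xs.
Proof. apply Xext; intro n. apply vadd_opp. Qed.

Lemma Xadd_sub x y : Xadd x (Xsub y x) = y.
Proof.
unfold Xsub. rewrite Xadd_assoc, (Xadd_comm x y), <- Xadd_assoc, Xadd_opp. apply Xadd_0.
Qed.

Lemma Xsub_self x : Xsub x x = Xzero Xs.
Proof. apply Xadd_opp. Qed.

Lemma Xcancel_l x y z : Xadd x y = Xadd x z -> y = z.
Proof.
intro E. assert (E2 : Xadd (Xscal (-1) x) (Xadd x y) = Xadd (Xscal (-1) x) (Xadd x z)) by (rewrite E; auto).
rewrite !Xadd_assoc, (Xadd_comm (Xscal (-1) x) x), Xadd_opp, !Xadd_0l in E2. exact E2.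
Qed.

Lemma Xcancel_r x y z : Xadd y x = Xadd z x -> y = z.
Proof. rewrite (Xadd_comm y), (Xadd_comm z). apply Xcancel_l. Qed.

Lemma Xline_add v1 v2 s1 s2 z :
  Xadd (Xadd v1 (Xscal s1 z)) (Xadd v2 (Xscal s2 z)) = Xadd (Xadd v1 v2) (Xscal (s1 + s2) z).
Proof. rewrite Xadd_AC, Xscal_plus. reflexivity. Qed.

Lemma Xline_scal t v s z : Xscal t (Xadd v (Xscal s z)) = Xadd (Xscal t v) (Xscal (t * s) z).
Proof. rewrite Xscal_add, Xscal_scal. reflexivity. Qed.

Lemma Xline_comb t v1 v2 s1 s2 z :
  Xadd (Xscal t (Xadd v1 (Xscal s1 z))) (Xscal (1 - t) (Xadd v2 (Xscal s2 z))) =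
  Xadd (Xadd (Xscal t v1) (Xscal (1 - t) v2)) (Xscal (t * s1 + (1 - t) * s2) z).
Proof. rewrite !Xline_scal, Xline_add. reflexivity. Qed.

Lemma Xline_diff v v' s s' z : Xadd v (Xscal s z) = Xadd v' (Xscal s' z) ->
  Xadd v (Xscal (-1) v') = Xscal (s' - s) z.
Proof.
intro E.
assert (E2 : Xadd (Xadd v (Xscal s z)) (Xadd (Xscal (-1) v') (Xscal (-s) z)) =
             Xadd (Xadd v' (Xscal s' z)) (Xadd (Xscal (-1) v') (Xscal (-s) z))) by (rewrite E; auto).
rewrite (Xadd_AC v), (Xadd_AC v'), !Xscal_plus in E2.
rewrite (Xadd_opp v') in E2.
replace (s + - s) with 0 in E2 by ring. rewrite Xscal_0, Xadd_0, Xadd_0l in E2.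
rewrite E2; try reflexivity.
Qed.

Lemma Xtrans_comb x t u v :
  Xadd x (Xadd (Xscal t u) (Xscal (1 - t) v)) =
  Xadd (Xscal t (Xadd x u)) (Xscal (1 - t) (Xadd x v)).
Proof.
rewrite !Xscal_add, Xadd_AC, Xscal_plus. replace (t + (1 - t)) with 1 by ring.
rewrite Xscal_1. reflexivity.
Qed.

Lemma Xsub_add x y : Xsub (Xadd x y) x = y.
Proof.
unfold Xsub. rewrite (Xadd_comm x y), <- Xadd_assoc, Xadd_opp. apply Xadd_0.
Qed.

End Xalg.
Arguments Xsub {Xs}.
Section HB.
Variable Xs : nat -> VL.
Notation PX := (prodX Xs).
Variable Y : PX -> Prop.
Hypothesis Y0 : Y (Xzero Xs).
Hypothesis Yadd : forall x y, Y x -> Y y -> Y (Xadd x y).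
Hypothesis Yscal : forall t x, Y x -> Y (Xscal t x).
Variable G : PX -> R.
Hypothesis Gconc : forall u v t, Y u -> Y v -> 0 <= t <= 1 ->
  t * G u + (1 - t) * G v <= G (Xadd (Xscal t u) (Xscal (1 - t) v)).
Hypothesis G0 : G (Xzero Xs) <= 0.

Definition goodA (A : PX * R -> Prop) : Prop :=
  (forall x r r', A (x, r) -> A (x, r') -> r = r') /\
  (forall x r y s, A (x, r) -> A (y, s) -> A (Xadd x y, r + s)) /\
  (forall t x r, A (x, r) -> A (Xscal t x, t * r)) /\
  (forall x r, A (x, r) -> Y x /\ G x <= r).

Lemma goodA_chain (F : (PX * R -> Prop) -> Prop) : (forall X, F X -> goodA X) ->
  (forall X Y, F X -> F Y -> (forall t, X t -> Y t) \/ (forall t, Y t -> X t)) ->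
  goodA (fun t => exists X, F X /\ X t).
Proof.
intros Fg Ftot. split; [|split; [|split]].
- intros x r r' [X1 [F1 h1]] [X2 [F2 h2]].
  destruct (Ftot X1 X2 F1 F2) as [s|s].
  + destruct (Fg X2 F2) as [f _]. apply (f x); auto.
  + destruct (Fg X1 F1) as [f _]. apply (f x); auto.
- intros x r y s [X1 [F1 h1]] [X2 [F2 h2]].
  destruct (Ftot X1 X2 F1 F2) as [sb|sb].
  + exists X2; split; auto. destruct (Fg X2 F2) as [_ [f _]]. apply f; auto.
  + exists X1; split; auto. destruct (Fg X1 F1) as [_ [f _]]. apply f; auto.
- intros t x r [X1 [F1 h1]]. exists X1; split; auto.
  destruct (Fg X1 F1) as [_ [_ [f _]]]. apply f; auto.
- intros x r [X1 [F1 h1]]. destruct (Fg X1 F1) as [_ [_ [_ f]]]. apply f; auto.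
Qed.

Lemma goodA_zero A : goodA A -> (exists x r, A (x, r)) -> A (Xzero Xs, 0).
Proof.
intros [_ [_ [sc _]]] [x [r h]]. pose proof (sc 0 x r h) as k.
rewrite Xscal_0, Rmult_0_l in k. exact k.
Qed.

Lemma goodA_empty : goodA (fun t => t = (Xzero Xs, 0)).
Proof.
split; [|split; [|split]].
- intros x r r' h1 h2. inversion h1; inversion h2; subst. reflexivity.
- intros x r y s h1 h2. inversion h1; inversion h2; subst. rewrite Xadd_0, Rplus_0_l. reflexivity.
- intros t x r h. inversion h; subst. rewrite Xscal_zero, Rmult_0_r. reflexivity.
- intros x r h. inversion h; subst. auto.
Qed.

Section Ext.
Variable A : PX * R -> Prop.
Hypothesis gA : goodA A.
Hypothesis neA : exists x r, A (x, r).
Variable z : PX.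
Hypothesis Yz : Y z.
Hypothesis nz : ~ exists r, A (z, r).

Lemma A0 : A (Xzero Xs, 0).
Proof. apply goodA_zero; auto. Qed.

Lemma key_ineq v1 r1 v2 r2 s1 s2 : A (v1, r1) -> A (v2, r2) -> 0 < s1 -> 0 < s2 ->
  (G (Xadd v1 (Xscal s1 z)) - r1) / s1 <= (r2 - G (Xadd v2 (Xscal (- s2) z))) / s2.
Proof.
intros h1 h2 p1 p2. destruct gA as [_ [ad [sc dom]]].
destruct (dom _ _ h1) as [Y1 _]. destruct (dom _ _ h2) as [Y2 _].
set (t := s2 / (s1 + s2)).
assert (tt : 0 <= t <= 1).
{ unfold t. split. apply Rmult_le_pos; [lra|left; apply Rinv_0_lt_compat; lra].
  apply (Rmult_le_reg_r (s1 + s2)); [lra|]. field_simplify; lra. }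
pose proof (Gconc (Xadd v1 (Xscal s1 z)) (Xadd v2 (Xscal (- s2) z)) t
  (Yadd _ _ Y1 (Yscal _ _ Yz)) (Yadd _ _ Y2 (Yscal _ _ Yz)) tt) as k.
rewrite Xline_comb in k.
replace (t * s1 + (1 - t) * - s2) with 0 in k by (unfold t; field; lra).
rewrite Xscal_0, Xadd_0 in k.
pose proof (ad _ _ _ _ (sc t _ _ h1) (sc (1 - t) _ _ h2)) as k2.
destruct (dom _ _ k2) as [_ k3].
set (a := G (Xadd v1 (Xscal s1 z))) in *.
set (b := G (Xadd v2 (Xscal (- s2) z))) in *.
assert (hk : s2 * a + s1 * b <= s2 * r1 + s1 * r2).
{ replace (s2 * a + s1 * b) with ((s1 + s2) * (t * a + (1 - t) * b)) by (unfold t; field; lra).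
  replace (s2 * r1 + s1 * r2) with ((s1 + s2) * (t * r1 + (1 - t) * r2)) by (unfold t; field; lra).
  apply Rmult_le_compat_l; lra. }
replace ((a - r1) / s1) with ((s2 * (a - r1)) * / (s1 * s2)) by (field; lra).
replace ((r2 - b) / s2) with ((s1 * (r2 - b)) * / (s1 * s2)) by (field; lra).
apply Rmult_le_compat_r; [left; apply Rinv_0_lt_compat; nra | lra].
Qed.

Definition Lset (r : R) : Prop :=
  exists v r0 s, A (v, r0) /\ 0 < s /\ r = (G (Xadd v (Xscal s z)) - r0) / s.

Definition cc := rsup Lset.

Lemma cc_spec : is_sup_Rbar Lset (Fin cc).
Proof.
apply rsup_spec.
- exists ((G (Xadd (Xzero Xs) (Xscal 1 z)) - 0) / 1). exists (Xzero Xs), 0, 1.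
  split; [apply A0|split; [lra|reflexivity]].
- exists ((0 - G (Xadd (Xzero Xs) (Xscal (- 1) z))) / 1).
  intros x [v [r0 [s [h [sp ->]]]]]. apply key_ineq; auto. apply A0. lra.
Qed.

Lemma cc_low v r s : A (v, r) -> 0 < s -> G (Xadd v (Xscal s z)) <= r + s * cc.
Proof.
intros h sp. assert (k : (G (Xadd v (Xscal s z)) - r) / s <= cc).
{ apply (sup_Fin_ub _ _ _ cc_spec). exists v, r, s. auto. }
apply (Rmult_le_compat_l s) in k; [|lra]. field_simplify in k; lra.
Qed.

Lemma cc_up v r s : A (v, r) -> 0 < s -> G (Xadd v (Xscal (- s) z)) <= r - s * cc.
Proof.
intros h sp. assert (k : cc <= (r - G (Xadd v (Xscal (- s) z))) / s).
{ apply (sup_Fin_lub _ _ _ cc_spec). intros x [v' [r' [s' [h' [sp' ->]]]]].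
  apply key_ineq; auto. }
apply (Rmult_le_compat_l s) in k; [|lra]. field_simplify in k; lra.
Qed.

Definition Aext (t : PX * R) : Prop :=
  exists v r s, A (v, r) /\ fst t = Xadd v (Xscal s z) /\ snd t = r + s * cc.

Lemma Aext_good : goodA Aext.
Proof.
destruct gA as [fu [ad [sc dom]]].
split; [|split; [|split]].
- intros x r r' [v [r0 [s [h [e1 e2]]]]] [v' [r0' [s' [h' [e1' e2']]]]].
  simpl in *. subst r r'. rewrite e1 in e1'.
  destruct (Req_dec s s') as [es|ns].
  + subst s'. apply Xcancel_r in e1'. subst v'. rewrite (fu _ _ _ h h'). reflexivity.
  + exfalso. apply nz. apply Xline_diff in e1'.
    exists (/ (s' - s) * (r0 + -1 * r0')).
    assert (ez : z = Xscal (/ (s' - s)) (Xadd v (Xscal (-1) v'))).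
    { rewrite e1', Xscal_scal. replace (/ (s' - s) * (s' - s)) with 1 by (field; lra).
      rewrite Xscal_1. reflexivity. }
    rewrite ez. apply sc. apply ad; auto.
- intros x r y s [v [r0 [s0 [h [e1 e2]]]]] [v' [r0' [s0' [h' [e1' e2']]]]].
  simpl in *. subst. exists (Xadd v v'), (r0 + r0'), (s0 + s0').
  split; [apply ad; auto|split; simpl].
  + apply Xline_add.
  + ring.
- intros t x r [v [r0 [s0 [h [e1 e2]]]]]. simpl in *. subst.
  exists (Xscal t v), (t * r0), (t * s0). split; [apply sc; auto|split; simpl].
  + apply Xline_scal.
  + ring.
- intros x r [v [r0 [s0 [h [e1 e2]]]]]. simpl in *. subst.
  destruct (dom _ _ h) as [Yv Gv]. split.
  + apply Yadd; auto.
  + destruct (Rtotal_order s0 0) as [neg|[zer|pos]].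
    * pose proof (cc_up v r0 (- s0) h ltac:(lra)) as k. rewrite Ropp_involutive in k. lra.
    * subst. rewrite Xscal_0, Xadd_0. lra.
    * apply cc_low; auto.
Qed.

Lemma Aext_sub t : A t -> Aext t.
Proof.
destruct t as [x r]. intro h. exists x, r, 0. split; auto. simpl. split.
- rewrite Xscal_0, Xadd_0. reflexivity.
- ring.
Qed.

Lemma Aext_new : Aext (z, cc) /\ ~ A (z, cc).
Proof.
split.
- exists (Xzero Xs), 0, 1. split; [apply A0|simpl; split].
  + rewrite Xscal_1, Xadd_0l. reflexivity.
  + ring.
- intro h. apply nz. exists cc. exact h.
Qed.

End Ext.

Lemma hahn_banach : exists l : PX -> R,
  (forall x y, Y x -> Y y -> l (Xadd x y) = l x + l y) /\
  (forall t x, Y x -> l (Xscal t x) = t * l x) /\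
  (forall x, Y x -> G x <= l x).
Proof.
destruct (my_zorn _ goodA goodA_chain) as [A [gA maxA]].
assert (neA : exists x r, A (x, r)).
{ apply NNPP. intro em. apply (maxA (fun t => t = (Xzero Xs, 0))).
  - intros [x r] h. exfalso. apply em. eauto.
  - exists (Xzero Xs, 0). split; [reflexivity|]. intro h. apply em. eauto.
  - exact goodA_empty. }
assert (full : forall x, Y x -> exists r, A (x, r)).
{ intros x Yx. apply NNPP. intro nz.
  destruct (Aext_new A gA neA x nz) as [a b].
  apply (maxA (Aext A x)); [apply Aext_sub | exists (x, cc A x); auto | apply Aext_good; auto]. }
exists (fun x => epsilon (inhabits 0) (fun r => A (x, r))).
assert (spec : forall x, Y x -> A (x, epsilon (inhabits 0) (fun r => A (x, r)))).
{ intros x Yx. apply (epsilon_spec (inhabits 0) (fun r => A (x, r))). apply full; auto. }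
destruct gA as [fu [ad [sc dom]]].
split; [|split].
- intros x y Yx Yy. apply (fu (Xadd x y)). apply spec; auto. apply ad; apply spec; auto.
- intros t x Yx. apply (fu (Xscal t x)). apply spec; auto. apply sc; apply spec; auto.
- intros x Yx. apply (dom x). apply spec; auto.
Qed.

End HB.
Lemma arch_lemma (a m : R) (N : nat) :
  (forall M, (N <= M)%nat -> m - / INR (S M) < a) -> m <= a.
Proof.
intro h. destruct (Rle_or_lt m a) as [l|l]; [exact l|exfalso].
destruct (archimed_cor1 (m - a) ltac:(lra)) as [N0 [h1 h2]].
specialize (h (N + N0)%nat ltac:(lia)).
assert (/ INR (S (N + N0)) <= / INR N0).
{ apply Rinv_le_contravar. apply lt_0_INR; lia. apply le_INR; lia. }
lra.
Qed.

Definition Xjoin {Xs : nat -> VL} (x y : prodX Xs) : prodX Xs := fun n => vjoin (x n) (y n).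

Lemma Xle_refl (Xs : nat -> VL) (x : prodX Xs) : Xle x x.
Proof. intro n; apply vle_refl. Qed.

Lemma Xle_trans (Xs : nat -> VL) (x y z : prodX Xs) : Xle x y -> Xle y z -> Xle x z.
Proof. intros a b n; eapply vle_trans; [apply a|apply b]. Qed.

Lemma Xle_antisym (Xs : nat -> VL) (x y : prodX Xs) : Xle x y -> Xle y x -> x = y.
Proof. intros a b. apply Xext; intro n. apply vle_antisym; auto. Qed.

Section Main.
Variable Xs : nat -> VL.
Notation PX := (prodX Xs).
Variable p : forall n, Xs (S n) -> Xs n.
Variable Y : PX -> Prop.
Variable q1 : Xs O -> R.
Variable H : PX -> Prop.
Hypothesis hreg : regular p.
Hypothesis hsub : subspace p Y.
Hypothesis hinc : increasing_fun q1.
Hypothesis hconc : concave_fun q1.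
Hypothesis hconv : convex_subset p H.
Hypothesis hmin : forall n y, Y y -> exists h, H h /\ vle (h n) (y n).
Hypothesis hv : forall (hs : nat -> prodX Xs) (m : R),
     (forall k, H (hs k)) -> (forall k, Xle (hs (S k)) (hs k)) ->
     is_inf_Rbar (fun r => exists k, r = qof q1 (hs k)) (Fin m) ->
     (exists b, inLim p b /\ forall k, Xle b (hs k)) /\
     (exists g, is_inf_X p (fun z => exists k, z = hs k) g /\ m <= qof q1 g).
Hypothesis hiv : forall hs : nat -> prodX Xs,
     (forall k, H (hs k)) ->
     (exists l u, inLim p l /\ inLim p u /\
        forall k, Xle l (hs k) /\ Xle (hs k) u) ->
     exists s : nat -> prodX Xs,
       (forall n, is_sup_X p (fun z => exists k, (n <= k)%nat /\ z = hs k) (s n)) /\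
       (exists g, is_inf_X p (fun z => exists n, z = s n) g /\ H g).

Notation Q := (qof q1).

Lemma p_mono n (a b : Xs (S n)) : vle a b -> vle (p n a) (p n b).
Proof. apply plm_mono. apply hreg. Qed.

Lemma p_add n (a b : Xs (S n)) : p n (vadd a b) = vadd (p n a) (p n b).
Proof. apply (proj1 (hreg n)). Qed.

Lemma p_scal n t (a : Xs (S n)) : p n (vscal t a) = vscal t (p n a).
Proof. apply (proj1 (hreg n)). Qed.

Lemma p_join n (a b : Xs (S n)) : p n (vjoin a b) = vjoin (p n a) (p n b).
Proof. apply (proj2 (hreg n)). Qed.

Lemma inLim_add x y : inLim p x -> inLim p y -> inLim p (Xadd x y).
Proof. intros a b n. unfold Xadd. rewrite p_add, <- a, <- b. reflexivity. Qed.

Lemma inLim_scal t x : inLim p x -> inLim p (Xscal t x).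
Proof. intros a n. unfold Xscal. rewrite p_scal, <- a. reflexivity. Qed.

Lemma inLim_join x y : inLim p x -> inLim p y -> inLim p (Xjoin x y).
Proof. intros a b n. unfold Xjoin. rewrite p_join, <- a, <- b. reflexivity. Qed.

Lemma descend x y n : inLim p x -> inLim p y -> vle (x n) (y n) ->
  forall j, (j <= n)%nat -> vle (x j) (y j).
Proof.
intros lx ly. induction n as [|n IH]; intros h j hj.
- assert (j = 0%nat) by lia. subst. exact h.
- destruct (Nat.eq_dec j (S n)) as [e|ne]; [subst; exact h|].
  apply IH; [|lia]. rewrite (lx n), (ly n). apply p_mono. exact h.
Qed.

Lemma Y_lim x : Y x -> inLim p x.
Proof. apply hsub. Qed.
Lemma H_lim h : H h -> inLim p h.
Proof. apply hconv. Qed.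

Lemma vle_low (V : VL) (a b j : V) : vle b j -> vle (vadd (vadd a b) (vscal (-1) j)) a.
Proof.
intro h. pose proof (vle_add b j (vadd a (vscal (-1) j)) h) as k.
replace (vadd b (vadd a (vscal (-1) j))) with (vadd (vadd a b) (vscal (-1) j)) in k.
2:{ rewrite vadd_assoc. f_equal. apply vadd_comm. }
replace (vadd j (vadd a (vscal (-1) j))) with a in k. exact k.
rewrite (vadd_comm a), vadd_assoc, vadd_opp, vadd_0l. reflexivity.
Qed.

Lemma H_join h1 h2 : H h1 -> H h2 -> H (Xjoin h1 h2).
Proof.
intros H1 H2. set (J := Xjoin h1 h2).
set (alt := fun k : nat => if Nat.even k then h1 else h2).
assert (Halt : forall k, H (alt k)) by (intro k; unfold alt; destruct (Nat.even k); auto).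
assert (lJ : inLim p J) by (apply inLim_join; apply H_lim; auto).
set (l := Xadd (Xadd h1 h2) (Xscal (-1) J)).
assert (ll : inLim p l).
{ apply inLim_add; [apply inLim_add; apply H_lim; auto|apply inLim_scal; auto]. }
assert (lh1 : Xle l h1) by (intro n; apply vle_low; apply vjoin_ub2).
assert (lh2 : Xle l h2).
{ intro n. unfold l, Xadd. rewrite (vadd_comm (h1 n)). apply vle_low. apply vjoin_ub1. }
destruct (hiv alt Halt) as [s [ss [g [gi Hg]]]].
{ exists l, J. split; [auto|split; [auto|]]. intro k. unfold alt. destruct (Nat.even k); split; auto.
  - intro n; apply vjoin_ub1.
  - intro n; apply vjoin_ub2. }
assert (sJ : forall n, Xle (s n) J).
{ intro n. destruct (ss n) as [_ [_ lub]]. apply lub; auto.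
  intros z [k [_ ->]]. unfold alt. destruct (Nat.even k); intro i; [apply vjoin_ub1|apply vjoin_ub2]. }
assert (Js : forall n, Xle J (s n)).
{ intro n. destruct (ss n) as [_ [ub _]]. intro i. apply vjoin_least.
  - assert (e : alt (2 * n)%nat = h1) by (unfold alt; rewrite Nat.even_even; auto).
    rewrite <- e. apply ub. exists (2 * n)%nat. split; [lia|auto].
  - assert (e : alt (2 * n + 1)%nat = h2) by (unfold alt; rewrite Nat.even_odd; auto).
    rewrite <- e. apply ub. exists (2 * n + 1)%nat. split; [lia|auto]. }
assert (gJ : g = J).
{ destruct gi as [lg [lbg glb]]. apply Xle_antisym.
  - apply Xle_trans with (s 0%nat); [apply lbg; exists 0%nat; auto|apply sJ].
  - apply glb; auto. intros z [n ->]. apply Js. }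
rewrite <- gJ. exact Hg.
Qed.

Section Compact.
Variable x : PX.
Hypothesis lx : inLim p x.
Variable hs : nat -> PX.
Hypothesis Hhs : forall n, H (hs n).
Hypothesis hle : forall n, vle (hs n n) (x n).

Fixpoint Jf (j i m : nat) : Xs i :=
  match m with
  | O => x i
  | S m' => vjoin (Jf j i m') (if Nat.leb j m' then hs m' i else x i)
  end.

Definition Uj (j : nat) : PX := fun i => Jf j i i.

Lemma Jf_ge_x j i m : vle (x i) (Jf j i m).
Proof.
induction m as [|m IH]; simpl; [apply vle_refl|]. eapply vle_trans; [exact IH|apply vjoin_ub1].
Qed.

Lemma Jf_mono j i m m' : (m <= m')%nat -> vle (Jf j i m) (Jf j i m').
Proof.
induction 1 as [|m' _ IH]; [apply vle_refl|]. simpl. eapply vle_trans; [exact IH|apply vjoin_ub1].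
Qed.

Lemma Jf_ge_hs j i n m : (j <= n)%nat -> (n < m)%nat -> vle (hs n i) (Jf j i m).
Proof.
intros h1 h2. apply vle_trans with (Jf j i (S n)); [|apply Jf_mono; lia].
simpl. replace (Nat.leb j n) with true by (symmetry; apply Nat.leb_le; lia). apply vjoin_ub2.
Qed.

Lemma Jf_le_x j i m : (m <= j)%nat -> vle (Jf j i m) (x i).
Proof.
induction m as [|m IH]; intro h; simpl; [apply vle_refl|].
replace (Nat.leb j m) with false by (symmetry; apply Nat.leb_gt; lia).
apply vjoin_least; [apply IH; lia|apply vle_refl].
Qed.

Lemma p_Jf j i m : p i (Jf j (S i) m) = Jf j i m.
Proof.
induction m as [|m IH]; simpl.
- symmetry; apply lx.
- rewrite p_join, IH. f_equal. destruct (Nat.leb j m).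
  + symmetry; apply (H_lim _ (Hhs m)).
  + symmetry; apply lx.
Qed.

Lemma Uj_lim j : inLim p (Uj j).
Proof.
intro i. unfold Uj. simpl. rewrite p_join, p_Jf. symmetry. apply vjoin_absorb.
destruct (Nat.leb j i).
- rewrite <- (H_lim _ (Hhs i) i). eapply vle_trans; [apply hle|apply Jf_ge_x].
- rewrite <- (lx i). apply Jf_ge_x.
Qed.

Lemma hs_le_x n j : (j <= n)%nat -> vle (hs n j) (x j).
Proof. intro h. apply (descend (hs n) x n); auto. apply H_lim; auto. Qed.

Lemma Uj_ge j n : (j <= n)%nat -> Xle (hs n) (Uj j).
Proof.
intros h i. unfold Uj. destruct (Nat.lt_ge_cases n i) as [l|l].
- apply Jf_ge_hs; lia.
- eapply vle_trans; [apply hs_le_x; exact l|apply Jf_ge_x].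
Qed.

Lemma Uj_diag j : vle (Uj j j) (x j).
Proof. unfold Uj. apply Jf_le_x. lia. Qed.

Fixpoint Pj (N k : nat) : PX :=
  match k with
  | O => hs N
  | S k' => Xjoin (Pj N k') (hs (N + S k'))
  end.

Lemma Pj_H N k : H (Pj N k).
Proof. induction k; simpl; auto. apply H_join; auto. Qed.

Lemma Pj_lim N k : inLim p (Pj N k).
Proof. apply H_lim, Pj_H. Qed.

Lemma Pj_mono N k k' : (k <= k')%nat -> Xle (Pj N k) (Pj N k').
Proof.
induction 1 as [|k' _ IH]; [apply Xle_refl|]. eapply Xle_trans; [exact IH|]. intro i; apply vjoin_ub1.
Qed.

Lemma Pj_ge N k i : (i <= k)%nat -> Xle (hs (N + i)) (Pj N k).
Proof.
intro h. destruct i as [|i].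
- rewrite Nat.add_0_r. eapply Xle_trans; [|apply Pj_mono with (k := 0%nat); lia]. apply Xle_refl.
- eapply Xle_trans; [|apply Pj_mono with (k := S i); exact h]. intro n; apply vjoin_ub2.
Qed.

Lemma Pj_le N k b : (forall n, (N <= n)%nat -> Xle (hs n) b) -> Xle (Pj N k) b.
Proof.
intro hb. induction k as [|k IH]; simpl; [apply hb; lia|].
intro i. apply vjoin_least; [apply IH|apply hb; lia].
Qed.

Lemma K_exists N : exists K, inLim p K /\ H K /\ (forall n, (N <= n)%nat -> Xle (hs n) K) /\
  (forall b, inLim p b -> (forall n, (N <= n)%nat -> Xle (hs n) b) -> Xle K b).
Proof.
destruct (hiv (Pj N) (Pj_H N)) as [s [ss [g [[lg [lbg glb]] Hg]]]].
{ exists (hs N), (Uj 0). split; [apply H_lim; auto|split; [apply Uj_lim|]]. intro k. split.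
  - replace (hs N) with (hs (N + 0)%nat) by (f_equal; lia). apply Pj_ge; lia.
  - apply Pj_le. intros n _. apply Uj_ge; lia. }
assert (PK : forall k, Xle (Pj N k) g).
{ intro k. apply glb; [apply Pj_lim|]. intros z [i ->].
  destruct (ss i) as [_ [ub _]]. eapply Xle_trans; [apply Pj_mono with (k' := (i + k)%nat); lia|].
  apply ub. exists (i + k)%nat. split; [lia|auto]. }
exists g. split; [auto|split; [auto|split]].
- intros n hn. replace n with (N + (n - N))%nat by lia. eapply Xle_trans; [|apply PK].
  apply Pj_ge with (k := (n - N)%nat); lia.
- intros b lb hb. apply Xle_trans with (s 0%nat); [apply lbg; exists 0%nat; auto|].
  destruct (ss 0%nat) as [_ [_ lub]]. apply lub; auto. intros z [k [_ ->]]. apply Pj_le; auto.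
Qed.

Definition Kf (N : nat) : PX := proj1_sig (constructive_indefinite_description _ (K_exists N)).

Lemma Kf_spec N : inLim p (Kf N) /\ H (Kf N) /\ (forall n, (N <= n)%nat -> Xle (hs n) (Kf N)) /\
  (forall b, inLim p b -> (forall n, (N <= n)%nat -> Xle (hs n) b) -> Xle (Kf N) b).
Proof. unfold Kf. destruct (constructive_indefinite_description _ (K_exists N)). simpl. auto. Qed.

Lemma Kf_dec N : Xle (Kf (S N)) (Kf N).
Proof.
destruct (Kf_spec (S N)) as [_ [_ [_ lub]]]. destruct (Kf_spec N) as [l [_ [ub _]]].
apply lub; auto. intros n hn. apply ub; lia.
Qed.

Lemma Kf_dec' N M : (N <= M)%nat -> Xle (Kf M) (Kf N).
Proof.
induction 1 as [|M _ IH]; [apply Xle_refl|]. eapply Xle_trans; [apply Kf_dec|exact IH].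
Qed.

Lemma Kf_diag N : vle (Kf N N) (x N).
Proof.
destruct (Kf_spec N) as [_ [_ [_ lub]]]. eapply vle_trans; [apply (lub (Uj N)); [apply Uj_lim|]|].
- intros n hn. apply Uj_ge; auto.
- apply Uj_diag.
Qed.

Lemma Q_mono a b : Xle a b -> Q a <= Q b.
Proof. intro h. apply hinc. apply h. Qed.

Lemma inf_Fin_exists (S : R -> Prop) M : (exists x, S x) -> (forall x, S x -> M <= x) ->
  exists r, is_inf_Rbar S (Fin r) /\ M <= r.
Proof.
intros [x0 Sx0] hM. destruct (inf_exists S) as [s [s1 s2]].
destruct s as [r| |].
- exists r. split; [split; auto|]. specialize (s2 (Fin M) hM). exact s2.
- exfalso. specialize (s1 x0 Sx0). exact s1.
- exfalso. specialize (s2 (Fin M) hM). exact s2.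
Qed.

Lemma compact (m : R) : (forall n, m - / INR (S n) < Q (hs n)) ->
  exists g, H g /\ Xle g x /\ m <= Q g.
Proof.
intro hq.
assert (QK : forall N, m <= Q (Kf N)).
{ intro N. apply (arch_lemma _ _ N). intros M hM. eapply Rlt_le_trans; [apply hq|].
  apply Q_mono. destruct (Kf_spec N) as [_ [_ [ub _]]]. apply ub; auto. }
destruct (inf_Fin_exists (fun r => exists k, r = Q (Kf k)) m) as [m' [im' mm']].
{ exists (Q (Kf 0%nat)); exists 0%nat; auto. }
{ intros r [k ->]. apply QK. }
assert (HK : forall k, H (Kf k)) by (intro k; apply Kf_spec).
destruct (hv Kf m' HK Kf_dec im') as [[b [lb hb]] [g' [[lg' [lbg' glb']] qg']]].
destruct (hiv Kf HK) as [s [ss [G [[lG [lbG glbG]] HG]]]].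
{ exists b, (Kf 0%nat). split; auto. split; [apply Kf_spec|]. intro k. split; auto.
  apply Kf_dec'; lia. }
exists G. split; [auto|split].
- intro j. apply vle_trans with (Kf j j); [|apply Kf_diag].
  apply vle_trans with (s j j); [apply lbG; exists j; auto|].
  destruct (ss j) as [_ [_ lub]]. apply lub; [apply Kf_spec|]. intros z [k [hk ->]].
  apply Kf_dec'; auto.
- apply Rle_trans with m'; auto. apply Rle_trans with (Q g'); auto. apply Q_mono.
  apply glbG; auto. intros z [n ->]. destruct (ss n) as [_ [ub _]].
  eapply Xle_trans; [apply lbg'; exists n; reflexivity|]. apply ub. exists n; auto.
Qed.

End Compact.


Definition Sn n (y : PX) (r : R) : Prop := exists h, H h /\ vle (h n) (y n) /\ r = Q h.
Definition gn n y := rsup (Sn n y).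

Lemma Yadd' x y : Y x -> Y y -> Y (Xadd x y).
Proof. apply hsub. Qed.
Lemma Yscal' t x : Y x -> Y (Xscal t x).
Proof. apply hsub. Qed.
Lemma Y0' : Y (Xzero Xs).
Proof. apply hsub. Qed.

Lemma gn_spec n y : Y y -> is_sup_Rbar (Sn n y) (Fin (gn n y)).
Proof.
intro Yy. apply rsup_spec.
- destruct (hmin n y Yy) as [h [Hh hh]]. exists (Q h), h; auto.
- exists (q1 (y 0%nat)). intros r [h [Hh [hh ->]]]. apply hinc.
  apply (descend h y n); [apply H_lim; auto|apply Y_lim; auto|exact hh|lia].
Qed.

Lemma gn_ge n y h : Y y -> H h -> vle (h n) (y n) -> Q h <= gn n y.
Proof. intros Yy Hh hh. apply (sup_Fin_ub _ _ _ (gn_spec n y Yy)). exists h; auto. Qed.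

Lemma gn_lub n y M : Y y -> (forall h, H h -> vle (h n) (y n) -> Q h <= M) -> gn n y <= M.
Proof.
intros Yy hM. apply (sup_Fin_lub _ _ _ (gn_spec n y Yy)). intros r [h [Hh [hh ->]]]. auto.
Qed.

Lemma H_comb h1 h2 t : H h1 -> H h2 -> 0 <= t <= 1 -> H (Xadd (Xscal t h1) (Xscal (1 - t) h2)).
Proof. intros; apply hconv; auto. Qed.

Lemma gn_conc n u v t : Y u -> Y v -> 0 <= t <= 1 ->
  t * gn n u + (1 - t) * gn n v <= gn n (Xadd (Xscal t u) (Xscal (1 - t) v)).
Proof.
intros Yu Yv ht. apply (comb_sup_le _ _ _ _ _ _ (gn_spec n u Yu) (gn_spec n v Yv) ht).
intros r1 r2 [h1 [H1 [l1 ->]]] [h2 [H2 [l2 ->]]].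
eapply Rle_trans; [apply hconc; exact ht|].
apply (gn_ge n _ (Xadd (Xscal t h1) (Xscal (1 - t) h2))).
- apply Yadd'; apply Yscal'; auto.
- apply H_comb; auto.
- apply vle_comb; auto.
Qed.

Lemma gn_mono n y y' : Y y -> Y y' -> vle (y n) (y' n) -> gn n y <= gn n y'.
Proof.
intros Yy Yy' hyy. apply gn_lub; auto. intros h Hh hh. apply gn_ge; auto.
eapply vle_trans; eauto.
Qed.

Lemma supergrad n x : Y x -> exists l : PX -> R,
  (forall u v, Y u -> Y v -> l (Xadd u v) = l u + l v) /\
  (forall t u, Y u -> l (Xscal t u) = t * l u) /\
  (forall y, Y y -> gn n y <= gn n x + l y - l x).
Proof.
intro Yx.
destruct (hahn_banach Xs Y Y0' Yadd' Yscal' (fun v => gn n (Xadd x v) - gn n x)) as [l [la [ls lg]]].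
- intros u v t Yu Yv ht. simpl. rewrite Xtrans_comb.
  pose proof (gn_conc n (Xadd x u) (Xadd x v) t (Yadd' _ _ Yx Yu) (Yadd' _ _ Yx Yv) ht). lra.
- simpl. rewrite Xadd_0. lra.
- exists l. split; [auto|split; [auto|]]. intros y Yy.
  assert (Ys : Y (Xsub y x)) by (apply Yadd'; auto; apply Yscal'; auto).
  specialize (lg _ Ys). simpl in lg. rewrite Xadd_sub in lg.
  unfold Xsub in lg. rewrite la, ls in lg; auto; [|apply Yscal'; auto]. lra.
Qed.

Lemma gn_compact x m : Y x -> (forall n, m <= gn n x) -> exists g, H g /\ Xle g x /\ m <= Q g.
Proof.
intros Yx hm.
assert (ex : forall n, exists h, H h /\ vle (h n) (x n) /\ m - / INR (S n) < Q h).
{ intro n. apply NNPP. intro nh. assert (gn n x <= m - / INR (S n)).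
  { apply gn_lub; auto. intros h Hh hh. apply Rnot_lt_le. intro c. apply nh. exists h; auto. }
  specialize (hm n). assert (0 < / INR (S n)) by (apply Rinv_0_lt_compat, lt_0_INR; lia). lra. }
set (hsf := fun n => proj1_sig (constructive_indefinite_description _ (ex n))).
assert (hsp : forall n, H (hsf n) /\ vle (hsf n n) (x n) /\ m - / INR (S n) < Q (hsf n)).
{ intro n. unfold hsf. destruct (constructive_indefinite_description _ (ex n)). simpl. auto. }
apply (compact x (Y_lim _ Yx) hsf); intro n; apply hsp.
Qed.

Notation F := (spf H Q).

Lemma spf_ge h x : H h -> Xle h x -> Rbar_le (Fin (Q h)) (F x).
Proof. intros Hh hx. destruct (Rbar_sup_spec (fun r => exists h, H h /\ Xle h x /\ r = Q h)) as [a _].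
apply a. exists h; auto. Qed.

Lemma spf_le x M : (forall h, H h -> Xle h x -> Q h <= M) -> Rbar_le (F x) (Fin M).
Proof.
intro hM. destruct (Rbar_sup_spec (fun r => exists h, H h /\ Xle h x /\ r = Q h)) as [_ b].
apply b. intros r [h [Hh [hx ->]]]. simpl. auto.
Qed.

Lemma part1 x : inLim p x -> F x <> p_infty.
Proof.
intros lx e. pose proof (spf_le x (q1 (x 0%nat))) as k. rewrite e in k. apply k.
intros h Hh hx. apply hinc. apply hx.
Qed.

Lemma Rbar_comb0 a b : Rbar_plus (Rbar_scal 0 a) (Rbar_scal 1 b) = b.
Proof.
destruct a, b; simpl; repeat destruct Req_EM_T; try lra; simpl; try reflexivity; f_equal; ring.
Qed.

Lemma Rbar_comb1 a b : Rbar_plus (Rbar_scal 1 a) (Rbar_scal 0 b) = a.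
Proof.
destruct a, b; simpl; repeat destruct Req_EM_T; try lra; simpl; try reflexivity; f_equal; ring.
Qed.

Lemma part2 : concave_Rbar p F.
Proof.
intros x y t lx ly ht.
destruct (Req_dec t 0) as [t0|t0].
{ subst t. rewrite Rminus_0_r, Xscal_0, Xscal_1, Xadd_0l, Rbar_comb0. apply Rbar_le_refl. }
destruct (Req_dec t 1) as [t1|t1].
{ subst t. replace (1 - 1) with 0 by ring. rewrite Xscal_0, Xscal_1, Xadd_0, Rbar_comb1. apply Rbar_le_refl. }
pose proof (Rbar_sup_spec (fun r => exists h, H h /\ Xle h x /\ r = Q h)) as sx.
pose proof (Rbar_sup_spec (fun r => exists h, H h /\ Xle h y /\ r = Q h)) as sy.
change (is_sup_Rbar (fun r => exists h, H h /\ Xle h x /\ r = Q h) (F x)) in sx.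
change (is_sup_Rbar (fun r => exists h, H h /\ Xle h y /\ r = Q h) (F y)) in sy.
pose proof (part1 x lx) as nx. pose proof (part1 y ly) as ny.
destruct (F x) as [a| |]; [|contradiction|].
2:{ simpl. destruct Req_EM_T; [lra|]. simpl. auto. }
destruct (F y) as [b| |]; [|contradiction|].
2:{ simpl. destruct Req_EM_T; [lra|]. simpl. auto. }
simpl.
assert (key : forall h1 h2, H h1 -> Xle h1 x -> H h2 -> Xle h2 y ->
  Rbar_le (Fin (t * Q h1 + (1 - t) * Q h2)) (F (Xadd (Xscal t x) (Xscal (1 - t) y)))).
{ intros h1 h2 H1 l1 H2 l2. eapply Rbar_le_trans; [|apply (spf_ge (Xadd (Xscal t h1) (Xscal (1 - t) h2)))].
  - simpl. apply hconc. lra.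
  - apply H_comb; auto; lra.
  - intro n. apply vle_comb; auto; lra. }
destruct (F (Xadd (Xscal t x) (Xscal (1 - t) y))) as [c| |] eqn:Ez.
- simpl. apply (comb_sup_le _ _ _ _ _ _ sx sy); [lra|].
  intros r1 r2 [h1 [H1 [l1 ->]]] [h2 [H2 [l2 ->]]]. specialize (key h1 h2 H1 l1 H2 l2).
  simpl in key. exact key.
- simpl; auto.
- exfalso. destruct (sup_Fin_ne _ _ sx) as [r1 [h1 [H1 [l1 _]]]].
  destruct (sup_Fin_ne _ _ sy) as [r2 [h2 [H2 [l2 _]]]].
  exact (key h1 h2 H1 l1 H2 l2).
Qed.

Lemma spf_le_gn x n : Y x -> Rbar_le (F x) (Fin (gn n x)).
Proof. intro Yx. apply spf_le. intros h Hh hx. apply gn_ge; auto. Qed.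

Lemma gn_below x u : Y x -> (forall n, Rbar_le u (Fin (gn n x))) -> Rbar_le u (F x).
Proof.
intros Yx hu. destruct u as [r| |].
- destruct (gn_compact x r Yx (fun n => hu n)) as [g [Hg [gx rg]]].
  eapply Rbar_le_trans; [|apply (spf_ge g x Hg gx)]. simpl. exact rg.
- exfalso. exact (hu 0%nat).
- simpl. auto.
Qed.

Lemma part3 x : Y x ->
  F x = Rbar_inf (fun r => exists a : prodX Xs -> R,
        affine_on Y a /\
        (forall h x', H h -> Y x' -> Xle h x' -> Q h <= a x') /\
        r = a x).
Proof.
intro Yx. symmetry. apply Rbar_inf_eq. split.
- intros r [a [aff [ha ->]]]. apply spf_le. intros h Hh hx. apply ha; auto.
- intros u hu. apply gn_below; auto. intro n.
  destruct (supergrad n x Yx) as [l [la [ls lg]]].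
  apply hu. exists (fun y => gn n x + l y - l x). split; [|split].
  + intros x1 x2 t Y1 Y2. rewrite la by (apply Yscal'; auto). rewrite !ls by auto. ring.
  + intros h x' Hh Yx' hx'. eapply Rle_trans; [|apply lg; auto]. apply gn_ge; auto.
  + ring.
Qed.

Lemma part4a : H (Xzero Xs) -> 0 <= q1 (vzero (Xs O)) ->
  forall x, inLim p x -> Xle (Xzero Xs) x -> Rbar_le (Fin 0) (F x).
Proof.
intros H0 q0 x lx hx. eapply Rbar_le_trans; [|apply (spf_ge (Xzero Xs) x H0 hx)]. simpl. exact q0.
Qed.

Lemma part4b : H (Xzero Xs) -> 0 <= q1 (vzero (Xs O)) ->
  forall x, Y x ->
        F x =
        Rbar_inf (fun r => exists (l : prodX Xs -> R) (c : R),
           pos_linear_on Y l /\ 0 <= c /\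
           (forall h x', H h -> Y x' -> Xle h x' -> Q h <= l x' + c) /\
           r = l x + c).
Proof.
intros H0 q0 x Yx. symmetry. apply Rbar_inf_eq. split.
- intros r [l [c [_ [_ [hl ->]]]]]. apply spf_le. intros h Hh hx. apply hl; auto.
- intros u hu. apply gn_below; auto. intro n.
  destruct (supergrad n x Yx) as [l [la [ls lg]]].
  assert (l0 : l (Xzero Xs) = 0).
  { rewrite <- (Xscal_0 Xs (Xzero Xs)), ls; [ring|apply Y0']. }
  apply hu. exists l, (gn n x - l x). split; [|split; [|split]].
  + split; [auto|split; [auto|]]. intros y Yy hy.
    pose proof (lg (Xadd x y) (Yadd' _ _ Yx Yy)) as k. rewrite la in k; auto.
    assert (gn n x <= gn n (Xadd x y)).
    { apply gn_mono; auto. apply Yadd'; auto.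
      pose proof (vle_add _ _ (x n) (hy n)) as k2. unfold Xzero in k2.
      rewrite vadd_0l, vadd_comm in k2. exact k2. }
    lra.
  + pose proof (lg (Xzero Xs) Y0') as k. rewrite l0 in k.
    assert (q1 (vzero (Xs O)) <= gn n (Xzero Xs)) by (apply (gn_ge n _ (Xzero Xs)); auto; [apply Y0'|apply vle_refl]).
    lra.
  + intros h x' Hh Yx' hx'. apply Rle_trans with (gn n x'); [apply gn_ge; auto|]. specialize (lg x' Yx'). lra.
  + ring.
Qed.

End Main.

Theorem mainTheorem10 (Xs : nat -> VL) (p : forall n, Xs (S n) -> Xs n)
  (Y : prodX Xs -> Prop) (q1 : Xs O -> R) (H : prodX Xs -> Prop) :
  regular p -> reduced p ->
  subspace p Y ->
  increasing_fun q1 -> concave_fun q1 ->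
  convex_subset p H ->
  (* (ii) H_n = pr_n H is minorizing for pr_n X_0 *)
  (forall n y, Y y -> exists h, H h /\ vle (h n) (y n)) ->
  (* (v) *)
  (forall (hs : nat -> prodX Xs) (m : R),
     (forall k, H (hs k)) -> (forall k, Xle (hs (S k)) (hs k)) ->
     is_inf_Rbar (fun r => exists k, r = qof q1 (hs k)) (Fin m) ->
     (exists b, inLim p b /\ forall k, Xle b (hs k)) /\
     (exists g, is_inf_X p (fun z => exists k, z = hs k) g /\ m <= qof q1 g)) ->
  (* (iii)-(iv) *)
  (forall hs : nat -> prodX Xs,
     (forall k, H (hs k)) ->
     (exists l u, inLim p l /\ inLim p u /\
        forall k, Xle l (hs k) /\ Xle (hs k) u) ->
     exists s : nat -> prodX Xs,
       (forall n, is_sup_X p (fun z => exists k, (n <= k)%nat /\ z = hs k) (s n)) /\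
       (exists g, is_inf_X p (fun z => exists n, z = s n) g /\ H g)) ->
  (forall x, inLim p x -> spf H (qof q1) x <> p_infty) /\
  concave_Rbar p (spf H (qof q1)) /\
  (forall x, Y x ->
     spf H (qof q1) x =
     Rbar_inf (fun r => exists a : prodX Xs -> R,
        affine_on Y a /\
        (forall h x', H h -> Y x' -> Xle h x' -> qof q1 h <= a x') /\
        r = a x)) /\
  (H (Xzero Xs) -> 0 <= q1 (vzero (Xs O)) ->
     (forall x, inLim p x -> Xle (Xzero Xs) x -> Rbar_le (Fin 0) (spf H (qof q1) x)) /\
     (forall x, Y x ->
        spf H (qof q1) x =
        Rbar_inf (fun r => exists (l : prodX Xs -> R) (c : R),
           pos_linear_on Y l /\ 0 <= c /\
           (forall h x', H h -> Y x' -> Xle h x' -> qof q1 h <= l x' + c) /\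
           r = l x + c))).
Proof.
intros hreg hred hsub hinc hconc hconv hmin hv hiv.
split; [|split; [|split]].
- intros x lx. eapply part1; eauto.
- eapply part2; eauto.
- intros x Yx. eapply part3; eauto.
- intros H0 q0. split.
  + intros x lx hx. eapply part4a; eauto.
  + intros x Yx. eapply part4b; eauto.
Qed.
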